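(* There is an absolute constant $C$ such that for every integer $d\ge2$, every $n$, every $t$ and all sets $S_1,\dots,S_t\subseteq[n]$, the function $f\colon\mathbb F_2^n\to\{0,1\}$ defined by $f(x)=1$ if $\big|\{j\in[t]: \exists i\in S_j,\ x_i=1\}\big|\ge d+1$ and $f(x)=0$ otherwise satisfies $R^{lin}_{1/3}(f)\le C d^2\log d$.
   Context: For $S\subseteq[n]$, $\chi_S(x)=\sum_{i\in S}x_i\pmod 2$. Exact randomized $\mathbb F_2$-sketch complexity: for $f\colon\mathbb F_2^n\to\mathbb R$ and $\delta\in[0,1]$, $R^{lin}_\delta(f)$ is the smallest integer $k$ such that there exists a probability distribution over $k$-tuples of subsets $\mathbf S_1,\dots,\mathbf S_k\subseteq[n]$ and a function $g\colon\mathbb F_2^k\to\mathbb R$ with $\Pr_{\mathbf S_1,\dots,\mathbf S_k}[g(\chi_{\mathbf S_1}(x),\dots,\chi_{\mathbf S_k}(x))=f(x)]\ge1-\delta$ for every $x\in\mathbb F_2^n$. *)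

(* Defs.v *)
From mathcomp Require Import all_boot.
From Stdlib Require Import Reals.
Set Implicit Arguments. Unset Strict Implicit. Unset Printing Implicit Defensive.

Definition rsum (T : finType) (F : T -> R) : R :=
  List.fold_right (fun x acc => Rplus (F x) acc) 0%R (enum T).

Definition chi (n : nat) (S : {set 'I_n}) (x : {ffun 'I_n -> bool}) : bool :=
  odd #|[set i in S | x i]|.

Definition sketch (n k : nat) (Ss : k.-tuple {set 'I_n}) (x : {ffun 'I_n -> bool})
  : {ffun 'I_k -> bool} := [ffun j => chi (tnth Ss j) x].

Definition lin_sketch (n : nat) (f : {ffun 'I_n -> bool} -> R) (delta : R) (k : nat)
  : Prop :=
  exists (p : k.-tuple {set 'I_n} -> R) (g : {ffun 'I_k -> bool} -> R),
    (forall Ss, (0 <= p Ss)%R) /\ rsum p = 1%R /\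
    forall x : {ffun 'I_n -> bool},
      (1 - delta <= rsum (fun Ss => if Req_EM_T (g (sketch Ss x)) (f x)
                                    then p Ss else 0))%R.

(* R^lin_delta(f) <= b  iff  some k with INR k <= b admits a sketch
   (R^lin_delta(f) is the least such k). *)
Definition Rlin_le (n : nat) (f : {ffun 'I_n -> bool} -> R) (delta b : R) : Prop :=
  exists k : nat, lin_sketch f delta k /\ (INR k <= b)%R.

Definition thr_or (n t d : nat) (S : 'I_t -> {set 'I_n}) (x : {ffun 'I_n -> bool}) : R :=
  if d.+1 <= #|[set j : 'I_t | [exists i in S j, x i]]| then 1%R else 0%R.

(* Main.v *)
From Stdlib Require Import Reals Lra.
Require Import Defs.
From mathcomp Require Import all_boot.
From mathcomp Require Import ssralg zmodp zify.
Delimit Scope R_scope with R.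
Set Implicit Arguments. Unset Strict Implicit. Unset Printing Implicit Defensive.

Definition U n t m (S : 'I_t -> {set 'I_n}) (h : {ffun 'I_t -> 'I_m}) (b : 'I_m) :=
  \bigcup_(j | h j == b) S j.
Definition Jset n t (S : 'I_t -> {set 'I_n}) (x : {ffun 'I_n -> bool}) :=
  [set j : 'I_t | [exists i in S j, x i]].
Definition det n t m r (S : 'I_t -> {set 'I_n}) (x : {ffun 'I_n -> bool})
  (w : {ffun 'I_t -> 'I_m} * {ffun 'I_m -> {ffun 'I_r -> {set 'I_n}}}) :=
  [set b : 'I_m | [exists s : 'I_r, chi (w.2 b s :&: U S w.1 b) x]].

Lemma det_le n t m r S x w : #|@det n t m r S x w| <= #|Jset S x|.
Proof.
apply: leq_trans (leq_imset_card w.1 _); apply: subset_leq_card.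
apply/subsetP => b; rewrite inE => /existsP [s].
rewrite /chi => /odd_gt0 /card_gt0P [i]; rewrite !inE => /andP [/andP [_ iU] xi].
move: iU => /bigcupP [j /eqP hj iS].
by apply/imsetP; exists j; rewrite // inE; apply/existsP; exists i; rewrite iS.
Qed.

Lemma det_ge n t m r (S : 'I_t -> {set 'I_n}) (x : {ffun 'I_n -> bool})
  (w : {ffun 'I_t -> 'I_m} * {ffun 'I_m -> {ffun 'I_r -> {set 'I_n}}}) (D : {set 'I_t}) :
  {in D &, injective w.1} ->
  (forall j, j \in D -> [exists s, chi (w.2 (w.1 j) s :&: U S w.1 (w.1 j)) x]) ->
  #|D| <= #|det S x w|.
Proof.
move=> inj H; rewrite -(card_in_imset inj); apply: subset_leq_card.
apply/subsetP => b /imsetP [j jD ->]; rewrite inE; exact: H.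
Qed.
Lemma count_trick (T I : finType) (tau : I -> T -> T) (P : pred T) :
  (forall c, injective (tau c)) ->
  (forall w, \sum_(c : I) (P (tau c w) : nat) <= 1) ->
  #|I| * \sum_(w : T) (P w : nat) <= #|T|.
Proof.
move=> inj H.
rewrite -sum_nat_const.
rewrite (eq_bigr (fun c => \sum_(w : T) (P (tau c w) : nat))); last first.
  by move=> c _; rewrite (reindex_inj (inj c)).
rewrite exchange_big /= -sum1_card.
by apply: leq_sum => w _; apply: H.
Qed.

Lemma sum_uniq1 (I : finType) (P : pred I) :
  (forall c1 c2, P c1 -> P c2 -> c1 = c2) -> \sum_(c : I) (P c : nat) <= 1.
Proof.
move=> H; rewrite -big_mkcondr /= sum1_card.
by apply/card_le1P => a Pa b; rewrite !inE; apply/idP/eqP => [Pb|->//]; apply: H.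
Qed.

Lemma exists_sub (T : finType) (A : {set T}) k :
  k <= #|A| -> exists B : {set T}, B \subset A /\ #|B| = k.
Proof.
elim: k => [|k IH] Hk; first by exists set0; rewrite sub0set cards0.
have [B [BA cB]] := IH (ltnW Hk).
have : #|A :\: B| > 0 by rewrite cardsD (setIidPr BA) cB subn_gt0.
case/card_gt0P => a; rewrite inE => /andP [aB aA].
exists (a |: B); split; first by rewrite subUset sub1set aA BA.
by rewrite cardsU1 aB cB.
Qed.

Lemma sum_ge1 (I : finType) (P : pred I) (F : I -> nat) i :
  P i -> 0 < F i -> 0 < \sum_(j | P j) F j.
Proof. by move=> Pi Fi; rewrite (bigD1 i) //= ltn_addr. Qed.
Definition tog (n : nat) (A : {set 'I_n}) i := [set k | (k \in A) (+) (k == i)].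

Lemma togK n i : involutive (fun A : {set 'I_n} => tog A i).
Proof. by move=> A; apply/setP => k; rewrite !inE addbK. Qed.

Lemma chi_tog n (A U : {set 'I_n}) (x : {ffun 'I_n -> bool}) i0 : i0 \in U -> x i0 ->
  chi (tog A i0 :&: U) x = ~~ chi (A :&: U) x.
Proof.
move=> iU xi; rewrite /chi.
set Y := [set i in A :&: U | x i].
case: (boolP (i0 \in A)) => iA.
- have -> : [set i in tog A i0 :&: U | x i] = Y :\ i0.
    apply/setP => k; rewrite !inE; case: (eqVneq k i0) => [->|]; first by rewrite iA.
    by rewrite addbF.
  have iY : i0 \in Y by rewrite !inE iA iU xi.
  have := cardsD1 i0 Y; rewrite iY => ->.
  by rewrite /= negbK.
- have -> : [set i in tog A i0 :&: U | x i] = i0 |: Y.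
    apply/setP => k; rewrite !inE; case: (eqVneq k i0) => [->|]; first by rewrite (negbTE iA) iU xi.
    by rewrite addbF.
  have iY : i0 \notin Y by rewrite !inE (negbTE iA).
  by rewrite cardsU1 iY.
Qed.

Definition Om n t m r : finType := ({ffun 'I_t -> 'I_m} * {ffun 'I_m -> {ffun 'I_r -> {set 'I_n}}})%type.

Lemma coll_count n t m' r (j j' : 'I_t) : j != j' ->
  m'.+1 * \sum_(w : Om n t m'.+1 r) ((w.1 j == w.1 j') : nat) <= #|Om n t m'.+1 r|.
Proof.
move=> jj.
pose tau (c : 'I_m'.+1) (w : Om n t m'.+1 r) : Om n t m'.+1 r :=
  ([ffun k => if k == j' then (GRing.add (w.1 k) c) else w.1 k], w.2).
have := (@count_trick _ _ tau (fun w : Om n t m'.+1 r => w.1 j == w.1 j')).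
rewrite card_ord; apply.

- move=> c; apply: (can_inj (g := tau (GRing.opp c))) => -[h R].
  rewrite /tau /=; congr (_, _); apply/ffunP => k; rewrite !ffunE.
  by case: (k == j') => //; rewrite GRing.addrK.
- move=> [h R]; apply: sum_uniq1 => c1 c2; rewrite /tau /= !ffunE eqxx (negbTE jj).
  by move=> /eqP -> /eqP /GRing.addrI.
Qed.


Definition togo n (A : {set 'I_n}) (o : option 'I_n) := if o is Some i then tog A i else A.

Lemma fail_count n t m r (S : 'I_t -> {set 'I_n}) (x : {ffun 'I_n -> bool}) j :
  j \in Jset S x ->
  2 ^ r * \sum_(w : Om n t m r)
     ([forall s, ~~ chi (w.2 (w.1 j) s :&: U S w.1 (w.1 j)) x] : nat) <= #|Om n t m r|.
Proof.
move=> jJ.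
pose i0 (h : {ffun 'I_t -> 'I_m}) := [pick i in U S h (h j) | x i].
pose tau (c : {ffun 'I_r -> bool}) (w : Om n t m r) : Om n t m r :=
  (w.1, [ffun b => if b == w.1 j then [ffun s => if c s then togo (w.2 b s) (i0 w.1)
                                                 else w.2 b s] else w.2 b]).
have := (@count_trick _ _ tau
   (fun w : Om n t m r => [forall s, ~~ chi (w.2 (w.1 j) s :&: U S w.1 (w.1 j)) x])).
rewrite card_ffun card_bool card_ord; apply.
- move=> c; apply: inv_inj => -[h R]; rewrite /tau /=; congr (_, _).
  apply/ffunP => b; rewrite !ffunE; case: (b == h j) => //.
  apply/ffunP => s; rewrite !ffunE; case: (c s) => //.
  by case: (i0 h) => //= i; rewrite togK.
- move=> [h R]; apply: sum_uniq1 => c1 c2.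
  have [i iU xi] : exists2 i, i \in U S h (h j) & x i.
    move: jJ; rewrite inE => /existsP [i /andP [iS xi]]; exists i => //.
    by apply/bigcupP; exists j.
  rewrite /tau /= /i0.
  case: pickP => [i' /andP [i'U xi'] | /(_ i)]; last by rewrite iU xi.
  move=> /forallP H1 /forallP H2; apply/ffunP => s.
  move: (H1 s) (H2 s); rewrite !ffunE eqxx !ffunE.
  by case: (c1 s); case: (c2 s); rewrite //= ?chi_tog //; case: (chi _ x).
Qed.



Lemma core n t m' r (S : 'I_t -> {set 'I_n}) (x : {ffun 'I_n -> bool}) d :
  m'.+1 = 6 * d.+1 ^ 2 -> 6 * d.+1 <= 2 ^ r ->
  3 * \sum_(w : Om n t m'.+1 r) (((d < #|det S x w|) != (d < #|Jset S x|)) : nat)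
    <= #|Om n t m'.+1 r|.
Proof.
move=> hm hr.
case: (leqP #|Jset S x| d) => hJ.
  rewrite big1 ?muln0 // => w _.
  by rewrite ltnNge (leq_trans (det_le _ _ _) hJ).
have [D [DJ cD]] := exists_sub hJ.
pose X (w : Om n t m'.+1 r) := \sum_(j in D) \sum_(j' in D) (((j != j') && (w.1 j == w.1 j')) : nat).
pose Y (w : Om n t m'.+1 r) := \sum_(j in D)
   ([forall s, ~~ chi (w.2 (w.1 j) s :&: U S w.1 (w.1 j)) x] : nat).
have pw : forall w, (((d < #|det S x w|) != true) : nat) <= X w + Y w.
  move=> w; case: (ltnP d #|det S x w|) => //= hd.
  case: (boolP [forall j in D, forall j' in D, (j != j') ==> (w.1 j != w.1 j')]) => inj.
  - have : ~~ [forall j in D, [exists s, chi (w.2 (w.1 j) s :&: U S w.1 (w.1 j)) x]].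
      apply/negP => /forall_inP H.
      have := det_ge (w := w) (D := D) (S := S) (x := x).
      move=> h.
      have inj' : {in D &, injective w.1}.
        move=> a b aD bD /eqP; apply: contraTeq => ab.
        by move/forall_inP: inj => /(_ a aD) /forall_inP /(_ b bD); rewrite ab.
      have := leq_trans (h inj' H) hd; by rewrite cD ltnn.
    move=> /forall_inPn [j jD]; rewrite negb_exists => /forallP nf.
    apply: leq_trans (leq_addl _ _); apply: (sum_ge1 jD).
    by rewrite lt0b; apply/forallP.
  - move: inj => /forall_inPn [j jD] /forall_inPn [j' j'D]; rewrite negb_imply negbK => /andP [jj e].
    apply: leq_trans (leq_addr _ _); apply: (sum_ge1 jD); apply: (sum_ge1 j'D).
    by rewrite jj e.
set N := #|Om n t m'.+1 r|.
have hX : m'.+1 * \sum_w X w <= d.+1 * d.+1 * N.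
  rewrite /X /=; rewrite (@exchange_big nat 0 addn) big_distrr /= -cD -mulnA -sum_nat_const.
  apply: leq_sum => j jD; rewrite (@exchange_big nat 0 addn) big_distrr /= -sum_nat_const.
  apply: leq_sum => j' j'D.
  case: (eqVneq j j') => [->|ne].
    by rewrite big1 ?muln0 // => w _; rewrite eqxx.
  apply: leq_trans (@coll_count n t m' r _ _ ne); rewrite leq_mul2l; apply/orP; right.
  by rewrite leq_eqVlt; apply/orP; left; apply/eqP; apply: eq_bigr => w _.
have hY : 2 ^ r * \sum_w Y w <= d.+1 * N.
  rewrite /Y /=; rewrite (@exchange_big nat 0 addn) big_distrr /= /=.
  apply: (@leq_trans (\sum_(j in D) N)); last by rewrite sum_nat_const cD.
  by apply: leq_sum => j jD; apply: fail_count; apply: (subsetP DJ).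
have hB : \sum_(w : Om n t m'.+1 r) (((d < #|det S x w|) != true) : nat)
          <= \sum_w X w + \sum_w Y w.
  apply: (@leq_trans (\sum_(w : Om n t m'.+1 r) (X w + Y w))); first by apply: leq_sum => w _; apply: pw.
  by rewrite big_split.
move: hX hY hB.
set XX := \sum_w X w; set YY := \sum_w Y w; set B := \sum_w _.
move=> hX hY hB.
have P : 0 < m'.+1 * 2 ^ r by rewrite muln_gt0 expn_gt0.
rewrite -(leq_pmul2r P).
have e1 : 3 * B * (m'.+1 * 2 ^ r) <= 3 * (m'.+1 * XX) * 2 ^ r + 3 * (2 ^ r * YY) * m'.+1.
  apply: (@leq_trans (3 * (XX + YY) * (m'.+1 * 2 ^ r))).
    by rewrite leq_mul2r leq_mul2l hB !orbT.
  by lia.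
apply: (leq_trans e1).
have e2 : 3 * (m'.+1 * XX) * (2 ^ r) <= 3 * (d.+1 * d.+1 * N) * (2 ^ r) by rewrite leq_mul2r leq_mul2l hX !orbT.
have e3 : 3 * ((2 ^ r) * YY) * m'.+1 <= 3 * (d.+1 * N) * m'.+1 by rewrite leq_mul2r leq_mul2l hY !orbT.
apply: (leq_trans (leq_add e2 e3)); rewrite hm.
have : 18 * d.+1 * d.+1 * d.+1 * N <= 3 * d.+1 * d.+1 * (2 ^ r) * N.
  apply: (@leq_trans (3 * d.+1 * d.+1 * N * (6 * d.+1))); first by apply: eq_leq; clear; move: (d.+1) (2 ^ r) N => a b c; lia.
  apply: (@leq_trans (3 * d.+1 * d.+1 * N * (2 ^ r))); first by rewrite leq_mul2l hr !orbT.
  by apply: eq_leq; clear; move: (d.+1) (2 ^ r) N => a b c; lia.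
move=> h; apply: leq_trans (_ : _ <= 3 * (d.+1 * d.+1 * N) * (2 ^ r) + 3 * d.+1 * d.+1 * (2 ^ r) * N) _.
  by rewrite leq_add2l; apply: leq_trans h; apply: eq_leq; clear; move: (d.+1) (2 ^ r) N => a b c; lia.
by apply: eq_leq; clear; move: (d.+1) (2 ^ r) N => a b c; lia.
Qed.

Lemma INRM a b : INR (a * b) = (INR a * INR b)%R.
Proof. by rewrite -mult_INR mulnE. Qed.
Lemma INRD a b : INR (a + b) = (INR a + INR b)%R.
Proof. by rewrite -plus_INR addnE. Qed.
Lemma INRX a L : INR (a ^ L) = (INR a ^ L)%R.
Proof. elim: L => [|L IH]; first by rewrite expn0. by rewrite expnS INRM IH. Qed.

Lemma ln_le' x y : (0 < x)%R -> (x <= y)%R -> (ln x <= ln y)%R.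
Proof.
move=> hx hxy; case: (Rle_lt_or_eq_dec _ _ hxy) => h.
- by apply: Rlt_le; apply: ln_increasing.
- by rewrite h; apply: Rle_refl.
Qed.

Lemma bound (d L : nat) : 2 <= d -> 2 ^ L <= d.+1 ->
  (INR (6 * d.+1 ^ 2 * (L + 4)) <= 100 / ln 2 * (INR d ^ 2) * ln (INR d))%R.
Proof.
move=> hd hL.
have hD : (2 <= INR d)%R by have := le_INR 2 d (elimT leP hd).
have l2 : (0 < ln 2)%R by rewrite -ln_1; apply: ln_increasing; lra.
have l2D : (ln 2 <= ln (INR d))%R by apply: ln_le'; lra.
have hA : (INR L * ln 2 <= 2 * ln (INR d))%R.
  rewrite -ln_pow; last lra.
  have -> : (2 * ln (INR d) = ln (INR d ^ 2))%R by rewrite ln_pow; [simpl; lra | lra].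
  apply: ln_le'; first by apply: pow_lt; lra.
  have : 2 ^ L <= d * d by apply: (leq_trans hL); nia.
  move/leP/le_INR => h; rewrite INRX INRM in h; replace (INR 2) with 2%R in h by (simpl; lra); simpl; lra.
rewrite !INRM INRD.
replace (INR 6) with 6%R by (simpl; lra).
rewrite S_INR.
replace (INR 4) with 4%R by (simpl; lra).
set D := INR d in hD l2D hA *; set A := INR L in hA *.
have hA0 : (0 <= A)%R by apply: pos_INR.
set l := ln D in l2D hA *.
have key : ((A + 4) * ln 2 <= 6 * l)%R by nra.
have hq : (36 * (D + 1) * ((D + 1) * 1) <= 100 * (D * (D * 1)))%R by nra.
apply (Rmult_le_reg_r (ln 2)); first by [].
have -> : (100 / ln 2 * (D * (D * 1)) * l * ln 2 = 100 * (D * (D * 1)) * l)%R by field; lra.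
have hl : (0 <= l)%R by lra.
have hsq : (0 <= 6 * ((D + 1) * ((D + 1) * 1)))%R by nra.
apply: (Rle_trans _ (6 * ((D + 1) * ((D + 1) * 1)) * (6 * l))).
  have := Rmult_le_compat_l _ _ _ hsq key; lra.
have := Rmult_le_compat_r l _ _ hl hq; lra.
Qed.
Lemma rsum_nat (T : finType) (G : T -> nat) : rsum (fun a => INR (G a)) = INR (\sum_a G a).
Proof.
have -> : \sum_a G a = \sum_(a <- enum T) G a by rewrite big_enum.
rewrite /rsum; elim: (enum T) => [|a s IH]; first by rewrite big_nil.
by rewrite big_cons /= IH INRD.
Qed.
Lemma rsum_mulr (T : finType) (F : T -> R) c : rsum (fun a => F a * c)%R = (rsum F * c)%R.
Proof. rewrite /rsum; elim: (enum T) => [|a s IH] /=; [ring | rewrite IH; ring]. Qed.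
Lemma rsum_ext (T : finType) (F G : T -> R) : (forall a, F a = G a) -> rsum F = rsum G.
Proof. by move=> H; rewrite /rsum; elim: (enum T) => [|a s IH] //=; rewrite IH H. Qed.

Theorem mainTheorem4 :
  exists C : R,
    forall (d n t : nat) (S : 'I_t -> {set 'I_n}),
      2 <= d ->
      Rlin_le (thr_or d S) (1 / 3)%R (C * (INR d ^ 2) * ln (INR d))%R.
Proof.
exists (100 / ln 2)%R => d n t S hd.
have hL : 2 ^ trunc_log 2 d.+1 <= d.+1 by apply: trunc_logP.
have hL2 : d.+1 < 2 ^ (trunc_log 2 d.+1).+1 by apply: trunc_log_ltn.
set L := trunc_log 2 d.+1 in hL hL2.
set r := L + 4.
have hr : 6 * d.+1 <= 2 ^ r.
  rewrite expnS in hL2; rewrite /r expnD (_ : 2 ^ 4 = 16) //.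
  move: hL2; move: (2 ^ L) => q; lia.
set m' := (6 * d.+1 ^ 2).-1.
have hm : m'.+1 = 6 * d.+1 ^ 2 by rewrite prednK // muln_gt0 expn_gt0.
pose Tp : finType := ('I_m'.+1 * 'I_r)%type.
exists #|Tp|; split; last first.
  by rewrite card_prod !card_ord hm; apply: bound.
pose Ssf (w : Om n t m'.+1 r) : #|Tp|.-tuple {set 'I_n} :=
  [tuple (w.2 (enum_val i).1 (enum_val i).2 :&: U S w.1 (enum_val i).1) | i < #|Tp|].
pose g (z : {ffun 'I_#|Tp| -> bool}) : R :=
  if d.+1 <= #|[set b : 'I_m'.+1 | [exists s : 'I_r, z (enum_rank ((b, s) : Tp))]]|
  then 1%R else 0%R.
pose N := #|Om n t m'.+1 r|.
have N0 : 0 < N.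
  by apply/card_gt0P; exists ([ffun=> ord0], [ffun=> [ffun=> set0]]).
pose cnt Ss := #|[set w : Om n t m'.+1 r | Ssf w == Ss]|.
have fib : forall (G : #|Tp|.-tuple {set 'I_n} -> nat),
    \sum_Ss G Ss * cnt Ss = \sum_w G (Ssf w).
  move=> G.
  have -> : \sum_Ss G Ss * cnt Ss = \sum_Ss \sum_w G Ss * (Ssf w == Ss).
    apply: eq_bigr => Ss _; rewrite /cnt -sum1_card big_distrr /= big_mkcond /=.
    by apply: eq_bigr => w _; rewrite inE; case: (Ssf w == Ss); rewrite ?muln1 ?muln0.
  rewrite (@exchange_big nat 0 addn); apply: eq_bigr => w _.
  rewrite (bigD1 (Ssf w)) //= eqxx muln1 big1 ?addn0 // => Ss /negbTE.
  by rewrite eq_sym => ->; rewrite muln0.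
have hN : (0 < INR N)%R by apply: lt_0_INR; apply/ltP.
exists (fun Ss => INR (cnt Ss) * / INR N)%R, g.
split; [|split].
- move=> Ss; apply: Rmult_le_pos; [apply: pos_INR | left; apply: Rinv_0_lt_compat => //].
- rewrite rsum_mulr rsum_nat.
  have := fib (fun _ => 1); rewrite (eq_bigr cnt); last by move=> Ss _; rewrite mul1n.
  move=> ->; rewrite sum1_card; apply: Rinv_r; apply: Rgt_not_eq; exact: hN.
- move=> x.
  have gE : forall w, g (sketch (Ssf w) x) = if d < #|det S x w| then 1%R else 0%R.
    move=> w; rewrite /g (_ : [set b : 'I_m'.+1 | _] = det S x w) //.
    apply/setP => b.
    rewrite !inE; apply: eq_existsb => s.
    by rewrite /sketch ffunE tnth_mktuple enum_rankK.
  pose bb Ss : nat := if Req_EM_T (g (sketch Ss x)) (thr_or d S x) then 1 else 0.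
  have E : rsum (fun Ss => if Req_EM_T (g (sketch Ss x)) (thr_or d S x)
                           then INR (cnt Ss) * / INR N else 0)%R
           = rsum (fun Ss => INR (bb Ss * cnt Ss) * / INR N)%R.
    apply: rsum_ext => Ss; rewrite /bb; case: Req_EM_T => hh; rewrite ?mul1n ?mul0n //=; ring.
  rewrite E.
  rewrite rsum_mulr rsum_nat fib.
  have pw : forall w, 1 <= bb (Ssf w) + ((d < #|det S x w|) != (d < #|Jset S x|)).
    move=> w; case EE: ((d < #|det S x w|) != (d < #|Jset S x|)); first by rewrite addn1.
    move/negbFE/eqP: EE => EE.
    rewrite addn0 /bb; case: Req_EM_T => // ne; exfalso; apply: ne.
    by rewrite gE /thr_or EE.
  have := core S x hm hr; rewrite -/N => hc.
  have hs : N <= \sum_w bb (Ssf w) + \sum_(w : Om n t m'.+1 r) (((d < #|det S x w|) != (d < #|Jset S x|)) : nat).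
    apply: (@leq_trans (\sum_(w : Om n t m'.+1 r)
               (bb (Ssf w) + (((d < #|det S x w|) != (d < #|Jset S x|)) : nat)))).
      have h1 : \sum_(w : Om n t m'.+1 r) 1 = N by rewrite sum1_card.
      rewrite -h1; apply: leq_sum => w _; exact: pw.
    by rewrite big_split.
  have good : 2 * N <= 3 * \sum_w bb (Ssf w).
    have ar : forall A B NN, 3 * B <= NN -> NN <= A + B -> 2 * NN <= 3 * A.
      by move=> A B NN; lia.
    exact: ar hc hs.
  move/leP/le_INR: good; rewrite !INRM => good.
  replace (INR 2) with 2%R in good by (simpl; lra).
  replace (INR 3) with 3%R in good by (simpl; lra).
  apply: (Rmult_le_reg_r (INR N)) => //.
  rewrite Rmult_assoc Rinv_l; last by apply: Rgt_not_eq.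
  lra.
Qed.
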